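(* Consider two symmetric platforms with common effective driver arrival rate $e>0$ and common abandonment rate $\beta>0$, static prices $\phi_1,\phi_2\in[0,\phi_h]$, and total passenger rate $\Lambda>0$. The (unique) Wardrop equilibrium under the QoS metric $\mathcal D$ is $$(\lambda_1,\lambda_2)=\Bigl(\frac{\Lambda f(\phi_2)}{f(\phi_1)+f(\phi_2)},\ \frac{\Lambda f(\phi_1)}{f(\phi_1)+f(\phi_2)}\Bigr).$$
   Context: $f:[0,\phi_h]\to(0,1]$ is strictly concave, strictly decreasing, differentiable, $f(0)=1$. For platform $i$ with passenger rate $\lambda_i$, $\mathcal D_i(\lambda_i)=\bigl(\sum_{n\ge0}\frac{e^n}{\prod_{a=1}^n(\lambda_i f(\phi_i)+a\beta)}\bigr)^{-1}$ is the stationary probability of no waiting driver. The Wardrop equilibrium under QoS $\mathcal D$ is $\lambda_1\in\arg\min_{\lambda\in[0,\Lambda]}(\mathcal D_1(\lambda)-\mathcal D_2(\Lambda-\lambda))^2$, $\lambda_2=\Lambda-\lambda_1$. *)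

(* Defs.v *)
From Stdlib Require Import Reals.
From Coquelicot Require Import Coquelicot.
Open Scope R_scope.

Fixpoint rate_prod (x beta : R) (n : nat) : R :=
  match n with
  | O => 1
  | S m => rate_prod x beta m * (x + INR (S m) * beta)
  end.

Definition QoS_D (e beta : R) (f : R -> R) (phi lam : R) : R :=
  / Series (fun n => e ^ n / rate_prod (lam * f phi) beta n).

Definition wardrop_eq_D (e beta : R) (f : R -> R) (phi1 phi2 Lam lam1 lam2 : R) : Prop :=
  (0 <= lam1 <= Lam /\
   forall lam, 0 <= lam <= Lam ->
     (QoS_D e beta f phi1 lam1 - QoS_D e beta f phi2 (Lam - lam1)) ^ 2
     <= (QoS_D e beta f phi1 lam - QoS_D e beta f phi2 (Lam - lam)) ^ 2)
  /\ lam2 = Lam - lam1.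

(* Main.v *)
Require Import Defs.
From Stdlib Require Import Reals Lra.
From Coquelicot Require Import Coquelicot.
Open Scope R_scope.

Lemma rp_lb x beta n : 0 <= x -> 0 < beta ->
  beta ^ n * INR (Factorial.fact n) <= rate_prod x beta n.
Proof.
  intros Hx Hb; induction n as [|m IH]; cbn [rate_prod pow].
  - simpl; lra.
  - change (Factorial.fact (S m)) with (S m * Factorial.fact m)%nat. rewrite mult_INR, (S_INR m).
    assert (0 <= beta ^ m * INR (Factorial.fact m)) by
      (apply Rmult_le_pos; [apply pow_le; lra| apply pos_INR]).
    assert (0 <= INR m) by apply pos_INR.
    apply Rle_trans with (beta ^ m * INR (Factorial.fact m) * ((INR m + 1) * beta)).
    + nra.
    + apply Rmult_le_compat; nra.
Qed.

Lemma rp_pos x beta n : 0 <= x -> 0 < beta -> 0 < rate_prod x beta n.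
Proof.
  intros Hx Hb. eapply Rlt_le_trans; [|apply rp_lb; auto].
  apply Rmult_lt_0_compat; [apply pow_lt; lra| apply lt_0_INR, Factorial.lt_O_fact].
Qed.

Lemma rp_mono x y beta n : 0 <= x -> x <= y -> 0 < beta ->
  rate_prod x beta n <= rate_prod y beta n.
Proof.
  intros Hx Hxy Hb; induction n as [|m IH]; cbn [rate_prod]; [lra|].
  assert (0 <= INR (S m)) by apply pos_INR.
  pose proof (rp_pos x beta m Hx Hb).
  apply Rmult_le_compat; try lra. nra.
Qed.

Lemma ex_S e beta x : 0 < e -> 0 < beta -> 0 <= x ->
  ex_series (fun n => e ^ n / rate_prod x beta n).
Proof.
  intros He Hb Hx.
  apply (@ex_series_le R_AbsRing R_CompleteNormedModule _ (fun k => scal ((e/beta)^k) (/ INR (Factorial.fact k)))).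
  2:{ eexists. apply is_exp_Reals. }
  intros n. unfold norm, scal; simpl; unfold abs, mult; simpl.
  pose proof (rp_pos x beta n Hx Hb). pose proof (rp_lb x beta n Hx Hb).
  assert (0 < INR (Factorial.fact n)) by apply lt_0_INR, Factorial.lt_O_fact.
  assert (0 < beta ^ n) by (apply pow_lt; lra).
  assert (0 < e ^ n) by (apply pow_lt; lra).
  rewrite Rabs_pos_eq.
  2:{ unfold Rdiv; apply Rmult_le_pos; [lra|left; apply Rinv_0_lt_compat; lra]. }
  unfold Rdiv. rewrite Rpow_mult_distr, pow_inv, Rmult_assoc, <- Rinv_mult.
  apply Rmult_le_compat_l; [lra|]. apply Rinv_le_contravar; nra.
Qed.

Definition SS e beta x := Series (fun n => e ^ n / rate_prod x beta n).

Lemma SS_strict e beta x y : 0 < e -> 0 < beta -> 0 <= x -> x < y ->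
  SS e beta y < SS e beta x.
Proof.
  intros He Hb Hx Hxy. unfold SS.
  pose proof (ex_S e beta x He Hb Hx) as Ex.
  assert (Hy : 0 <= y) by lra.
  pose proof (ex_S e beta y He Hb Hy) as Ey.
  destruct (ex_series_incr_1 (fun n => e ^ n / rate_prod x beta n)) as [Ex1 _]; specialize (Ex1 Ex).
  destruct (ex_series_incr_1 (fun n => e ^ n / rate_prod y beta n)) as [Ey1 _]; specialize (Ey1 Ey).
  rewrite (Series_incr_1 _ Ex), (Series_incr_1 _ Ey).
  apply Rplus_le_lt_compat; [right; reflexivity|].
  rewrite (Series_incr_1 _ Ex1), (Series_incr_1 _ Ey1).
  apply Rplus_lt_le_compat.
  - cbn [rate_prod pow]. rewrite !Rmult_1_l, !Rmult_1_r. unfold Rdiv.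
    apply Rmult_lt_compat_l; [lra|]. apply Rinv_lt_contravar; simpl; nra.
  - apply Series_le.
    + intros n. pose proof (rp_pos y beta (S (S n)) Hy Hb).
      pose proof (rp_mono x y beta (S (S n)) Hx (Rlt_le _ _ Hxy) Hb).
      pose proof (rp_pos x beta (S (S n)) Hx Hb).
      assert (0 < e ^ S (S n)) by (apply pow_lt; lra).
      split.
      * unfold Rdiv; apply Rmult_le_pos; [lra|left; apply Rinv_0_lt_compat; lra].
      * unfold Rdiv; apply Rmult_le_compat_l; [lra|]. apply Rinv_le_contravar; lra.
    + apply (proj1 (ex_series_incr_1 _) Ex1).
Qed.

Lemma SS_pos e beta x : 0 < e -> 0 < beta -> 0 <= x -> 0 < SS e beta x.
Proof.
  intros He Hb Hx. unfold SS.
  pose proof (ex_S e beta x He Hb Hx) as Ex.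
  destruct (ex_series_incr_1 (fun n => e ^ n / rate_prod x beta n)) as [Ex1 _]; specialize (Ex1 Ex).
  rewrite (Series_incr_1 _ Ex).
  set (t := fun k => e ^ S k / rate_prod x beta (S k)).
  assert (Ht : forall n, 0 <= t n).
  { intros n. unfold t. pose proof (rp_pos x beta (S n) Hx Hb).
    assert (0 < e ^ S n) by (apply pow_lt; lra).
    unfold Rdiv; apply Rmult_le_pos; [lra|left; apply Rinv_0_lt_compat; lra]. }
  assert (0 <= Series t).
  { replace 0 with (0 * Series t) by ring. rewrite <- Series_scal_l.
    apply Series_le; [|exact Ex1]. intros n; specialize (Ht n); split; nra. }
  assert (E0 : e ^ 0 / rate_prod x beta 0 = 1) by (simpl; field). rewrite E0. change (Series _) with (Series t). lra.
Qed.

Lemma SS_inj e beta x y : 0 < e -> 0 < beta -> 0 <= x -> 0 <= y ->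
  SS e beta x = SS e beta y -> x = y.
Proof.
  intros He Hb Hx Hy Heq. destruct (Rtotal_order x y) as [H|[H|H]]; auto.
  - pose proof (SS_strict e beta x y He Hb Hx H). lra.
  - pose proof (SS_strict e beta y x He Hb Hy H). lra.
Qed.

Theorem lemma5 (f : R -> R) (phi_h e beta Lam phi1 phi2 : R)
  (Hphih : 0 < phi_h)
  (Hrange : forall x, 0 <= x <= phi_h -> 0 < f x <= 1)
  (Hf0 : f 0 = 1)
  (Hdecr : forall x y, 0 <= x -> x < y -> y <= phi_h -> f y < f x)
  (Hconc : forall x y t, 0 <= x <= phi_h -> 0 <= y <= phi_h -> x <> y ->
             0 < t < 1 -> t * f x + (1 - t) * f y < f (t * x + (1 - t) * y))
  (Hdiff : forall x, 0 < x < phi_h -> ex_derive f x)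
  (He : 0 < e) (Hbeta : 0 < beta) (HLam : 0 < Lam)
  (Hphi1 : 0 <= phi1 <= phi_h) (Hphi2 : 0 <= phi2 <= phi_h) :
  forall lam1 lam2 : R,
    wardrop_eq_D e beta f phi1 phi2 Lam lam1 lam2 <->
    (lam1 = Lam * f phi2 / (f phi1 + f phi2) /\
     lam2 = Lam * f phi1 / (f phi1 + f phi2)).
Proof.
  intros lam1 lam2.
  pose proof (Hrange phi1 Hphi1) as [Hf1 _].
  pose proof (Hrange phi2 Hphi2) as [Hf2 _].
  set (f1 := f phi1) in *. set (f2 := f phi2) in *.
  assert (HQ : forall phi lam, QoS_D e beta f phi lam = / SS e beta (lam * f phi))
    by reflexivity.
  set (ls := Lam * f2 / (f1 + f2)).
  assert (Hls1 : ls * f1 = (Lam - ls) * f2) by (unfold ls; field; lra).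
  assert (Hls0 : 0 <= ls).
  { unfold ls, Rdiv. apply Rmult_le_pos; [nra|left; apply Rinv_0_lt_compat; lra]. }
  assert (HlsL : ls <= Lam).
  { unfold ls. apply Rmult_le_reg_r with (f1 + f2); [lra|].
    unfold Rdiv. rewrite Rmult_assoc, Rinv_l by lra. nra. }
  unfold wardrop_eq_D. split.
  - intros [[[H0 HL] Hmin] Hl2].
    specialize (Hmin ls (conj Hls0 HlsL)).
    rewrite !HQ in Hmin. fold f1 f2 in Hmin. rewrite Hls1 in Hmin.
    rewrite Rminus_diag in Hmin. simpl in Hmin.
    assert (Hz : / SS e beta (lam1 * f1) = / SS e beta ((Lam - lam1) * f2)).
    { set (a := / SS e beta (lam1 * f1)) in *.
      set (b := / SS e beta ((Lam - lam1) * f2)) in *. nra. }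
    assert (Hp1 : 0 <= lam1 * f1) by nra.
    assert (Hp2 : 0 <= (Lam - lam1) * f2) by nra.
    pose proof (SS_pos e beta _ He Hbeta Hp1).
    pose proof (SS_pos e beta _ He Hbeta Hp2).
    assert (Hs : SS e beta (lam1 * f1) = SS e beta ((Lam - lam1) * f2)).
    { rewrite <- (Rinv_inv (SS e beta (lam1 * f1))), Hz, Rinv_inv. reflexivity. }
    apply SS_inj in Hs; auto.
    assert (E1 : lam1 = ls) by (unfold ls; field_simplify_eq; [nra|lra]).
    split; [exact E1|]. rewrite Hl2, E1. unfold ls; field; lra.
  - intros [E1 E2]. split.
    + split; [fold ls in E1; lra|].
      intros lam _. rewrite !HQ. fold f1 f2. fold ls in E1. rewrite E1, Hls1.
      rewrite Rminus_diag. simpl. rewrite Rmult_0_l. 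
      apply pow2_ge_0.
    + rewrite E2, E1. unfold ls. field; lra.
Qed.
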